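(* Let $q$ be a prime power and $k\ge3$, $u\ge2$, $h\ge1$ integers. Let $U_1,\dots,U_h$ be $u$-dimensional subspaces of $\mathbf F_q^k$ with $U_i\cap U_j=\{0\}$ for $i\ne j$, and assume $q^k-q^{k-1}>h(q^u-1)$. Let $U$ be the set of nonzero vectors of $\mathbf F_q^k$ not in $U_1\cup\dots\cup U_h$, let $\widetilde G$ be a $k\times\frac{|U|}{q-1}$ matrix whose columns consist of exactly one representative of each class $\{\lambda\mathbf v:\lambda\in\mathbf F_q^*\}$, $\mathbf v\in U$, and let $\mathbf C$ be the linear code with generator matrix $\widetilde G$. Then $\mathbf C$ is a linear $\big[\frac{(q^k-1)-h(q^u-1)}{q-1},\,k,\,d\big]_q$ code with $d\ge q^{k-1}-hq^{u-1}$, and $\mathbf C$ has at most $h+1$ distinct nonzero weights. *)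

(* Defs.v *)
From HB Require Import structures.
From mathcomp Require Import all_boot all_order all_algebra all_field.
Set Implicit Arguments. Unset Strict Implicit. Unset Printing Implicit Defensive.
Import GRing.Theory.
Local Open Scope ring_scope.

Definition wt (F : fieldType) (n : nat) (c : 'rV[F]_n) : nat :=
  #|[set j : 'I_n | c 0 j != 0]|.

Definition colv (F : fieldType) (k n : nat) (G : 'M[F]_(k, n)) (j : 'I_n) : 'rV[F]_k :=
  (col j G)^T.

Definition proportional (F : fieldType) (k : nat) (v w : 'rV[F]_k) : Prop :=
  exists2 l : F, l != 0 & w = l *: v.

Definition inU (F : fieldType) (k h : nat) (Us : 'I_h -> {vspace 'rV[F]_k})
  (v : 'rV[F]_k) : Prop :=
  v != 0 /\ forall i, v \notin Us i.

Definition rep_matrix (F : fieldType) (k h n : nat)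
  (Us : 'I_h -> {vspace 'rV[F]_k}) (G : 'M[F]_(k, n)) : Prop :=
  [/\ forall j, inU Us (colv G j),
      forall j1 j2, j1 != j2 -> ~ proportional (colv G j1) (colv G j2)
    & forall v, inU Us v -> exists j, proportional v (colv G j)].

(* Main.v *)
Require Import Defs.
From HB Require Import structures.
From mathcomp Require Import all_boot all_order all_algebra all_field.
From mathcomp Require Import zify.
Set Implicit Arguments. Unset Strict Implicit. Unset Printing Implicit Defensive.
Import GRing.Theory.
Local Open Scope ring_scope.

Lemma card_setE (T : finType) (Q : pred T) :
  #|[set x | Q x]| = (\sum_x (Q x : nat))%N.
Proof.
rewrite -sum1_card big_mkcond /=; apply: eq_bigr => x _; rewrite inE.
by case: (Q x).
Qed.

Section Count.
Variables (F : finFieldType) (k h n : nat) (Us : 'I_h -> {vspace 'rV[F]_k}).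
Variable (G : 'M[F]_(k, n)).
Hypothesis hG : rep_matrix Us G.
Hypothesis hdisj : forall i j, i != j -> (Us i :&: Us j)%VS = 0%VS.

Definition inUb (v : 'rV[F]_k) := (v != 0) && [forall i, v \notin Us i].

Lemma inUP v : reflect (inU Us v) (inUb v).
Proof.
apply: (iffP andP) => [[Hv /forallP H] | [Hv H]]; split => //.
by apply/forallP.
Qed.

Lemma count_reps (P : pred 'rV[F]_k)
  (HP : forall l v, l != 0 -> P (l *: v) = P v) :
  #|[set v | inUb v && P v]| = (#|F|.-1 * #|[set j | P (colv G j)]|)%N.
Proof.
case: hG => H1 H2 H3.
pose T := setX [set j | P (colv G j)] [set~ (0:F)].
pose phi := fun jl : 'I_n * F => jl.2 *: colv G jl.1.
have ->: [set v | inUb v && P v] = phi @: T.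
  apply/setP => v; rewrite inE; apply/idP/imsetP.
  - move=> /andP[/inUP Hv Pv]; have [j [l ln0 E]] := H3 v Hv.
    exists (j, l^-1).
      by rewrite in_setX !inE /= E HP // Pv invr_eq0 ln0.
    by rewrite /phi /= E scalerA mulVf // scale1r.
  - move=> [[j l]]; rewrite in_setX !inE /= => /andP[Pj ln0] ->.
    have [cn0 cU] := H1 j.
    rewrite /phi /= HP // Pj andbT; apply/andP; split.
      by rewrite scaler_eq0 negb_or ln0.
    apply/forallP => i; apply/negP => Hi; move: (cU i); rewrite -[colv G j](scalerK ln0).
    by rewrite memvZ.
rewrite card_in_imset ?cardsX ?cardsC1 1?mulnC //.
move=> [j1 l1] [j2 l2]; rewrite !in_setX !inE /= => /andP[_ l1n0] /andP[_ l2n0].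
rewrite /phi /= => E.
have Hj : j1 = j2.
  apply/eqP; apply/negPn/negP => /H2; apply; exists (l2^-1 * l1).
    by rewrite mulf_neq0 ?invr_eq0.
  by rewrite -scalerA E scalerA mulVf // scale1r.
subst j2; have [cn0 _] := H1 j1.
have: (l1 - l2) *: colv G j1 = 0 by rewrite scalerBl E subrr.
by move/eqP; rewrite scaler_eq0 (negbTE cn0) orbF subr_eq0 => /eqP->.
Qed.


Lemma partition_count (P : pred 'rV[F]_k) :
  #|[set v | (v != 0) && P v]| =
  (#|[set v | inUb v && P v]| +
   \sum_i #|[set v | (v \in Us i) && (v != 0%R) && P v]|)%N.
Proof.
rewrite !card_setE.
under [X in (_ + X)%N]eq_bigr do rewrite card_setE.
rewrite (exchange_big) /= -big_split /=; apply: eq_bigr => v _.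
have [->|vn0] := eqVneq v 0.
  by rewrite /inUb eqxx /= big1 // => i _; rewrite andbF.
case Pv: (P v); last first.
  by rewrite !andbF big1 // => i _; rewrite andbF.
rewrite /inUb vn0 !andbT /=.
case: (pickP (fun i => v \in Us i)) => [i vi | none].
  have ->: [forall i, v \notin Us i] = false.
    by apply/negbTE/negP => /forallP /(_ i); rewrite vi.
  rewrite (bigD1 i) //= vi big1 // => j ji.
  rewrite !andbT; apply/eqP; rewrite eqb0; apply/negP => vj.
  have: v \in (Us j :&: Us i)%VS by rewrite memv_cap vi vj.
  by rewrite hdisj // memv0 (negbTE vn0).
have ->: [forall i, v \notin Us i] = true by apply/forallP => i; rewrite none.
by rewrite big1 // => i _; rewrite none.
Qed.

End Count.

Lemma card_vs (F : finFieldType) k (W : {vspace 'rV[F]_k}) :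
  #|[set v | v \in W]| = (#|F| ^ \dim W)%N.
Proof. by rewrite cardsE card_vspace. Qed.

Lemma card_nz_f (F : finFieldType) k (f : 'Hom('rV[F]_k, 'M[F]_(1,1)))
  (W : {vspace 'rV[F]_k}) :
  let c := #|[set v | (v \in W) && (f v != 0)]| in
  let e := \dim (W :&: lker f) in
  (c + #|F| ^ e = #|F| ^ \dim W)%N /\ (e = \dim W \/ e.+1 = \dim W).
Proof.
move=> c e; split.
  rewrite -card_vs -(cardsID [set v | f v == 0]) addnC -card_vs; congr (_ + _)%N.
    by apply: eq_card => v; rewrite !inE memv_cap memv_ker.
  by apply: eq_card => v; rewrite !inE andbC.
have := limg_ker_dim f W; rewrite -/e.
have : (\dim (f @: W) <= 1)%N.
  by apply: leq_trans (dimvS (subvf _)) _; rewrite dimvf.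
case: (\dim (f @: W)) => [|[|//]] _; rewrite ?addn0 ?addn1; auto.
Qed.


Lemma mx11_neq0 (F : fieldType) (A : 'M[F]_(1,1)) : (A != 0) = (A 0 0 != 0).
Proof.
congr negb; apply/eqP/eqP => [->|H]; first by rewrite [LHS]mxE.
by apply/matrixP => i j; rewrite !ord1 H [RHS]mxE.
Qed.

Lemma weight_x (F : finFieldType) (k u h : nat)
  (Us : 'I_h -> {vspace 'rV[F]_k})
  (hk : (1 <= k)%N) (hu : (1 <= u)%N)
  (hdim : forall i, \dim (Us i) = u)
  (hdisj : forall i j, i != j -> (Us i :&: Us j)%VS = 0%VS)
  (hbound : (h * (#|F| ^ u - 1) < #|F| ^ k - #|F| ^ k.-1)%N)
  (n : nat) (G : 'M[F]_(k, n)) (hG : rep_matrix Us G)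
  (x : 'rV[F]_k) (xn0 : x != 0) :
  exists2 m, (m <= h)%N &
    wt (x *m G) = (#|F| ^ k.-1 - m * #|F| ^ u.-1)%N /\ (0 < wt (x *m G))%N.
Proof.
pose f : 'Hom('rV[F]_k, 'M[F]_(1,1)) := linfun (mulmxr x^T).
have fE : forall v, f v = v *m x^T by move=> v; rewrite lfunE.
pose P := fun v : 'rV[F]_k => f v != 0.
have HP : forall l v, l != 0 -> P (l *: v) = P v.
  by move=> l v ln0; rewrite /P !fE -scalemxAl scaler_eq0 (negbTE ln0).
have Hwt : wt (x *m G) = #|[set j | P (colv G j)]|.
  rewrite /wt; apply: eq_card => j; rewrite !inE /P fE mx11_neq0.
  congr (_ != _); rewrite !mxE; apply: eq_bigr => i _.
  by rewrite /colv !mxE mulrC.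
have Hc := count_reps hG HP.
have Hp := partition_count hdisj P.
have P0 : forall v, P v -> v != 0.
  by move=> v; apply: contraTneq => ->; rewrite /P fE mul0mx eqxx.
have Hfull : #|[set v | (v != 0) && P v]| = #|[set v : 'rV[F]_k | (v \in (fullv : {vspace 'rV[F]_k})) && (f v != 0%R)]|.
  apply: eq_card => v; rewrite !inE memvf /=.
  by case Pv: (P v); rewrite ?(P0 _ Pv) ?andbF ?andbT.
have Hi : forall i, #|[set v | (v \in Us i) && (v != 0%R) && P v]| =
                    #|[set v | (v \in Us i) && (f v != 0%R)]|.
  move=> i; apply: eq_card => v; rewrite !inE -/(P v).
  by case Pv: (P v); rewrite ?(P0 _ Pv) ?andbF ?andbT.
set q := #|F|.
have q1 : (1 < q)%N by apply: finNzRing_gt1.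
set t := q.-1.
have t0 : (0 < t)%N by rewrite /t; lia.
have qt : q = t.+1 by rewrite /t; lia.
have [Hf1 Hf2] := card_nz_f f fullv.
have dimf : \dim (fullv : {vspace 'rV[F]_k}) = k.
  by rewrite dimvf /dim /= mul1n.
rewrite dimf in Hf1 Hf2.
have cpos : (0 < #|[set v : 'rV[F]_k | (v \in (fullv : {vspace 'rV[F]_k})) && (f v != 0%R)]|)%N.
  apply/card_gt0P.
  have [v Hv] : exists v : 'rV[F]_k, v *m x^T != 0%R.
    case: (pickP (fun v : 'rV[F]_k => v *m x^T != 0%R)) => [v Hv | H]; first by exists v.
    exfalso; move/negP: xn0; apply; rewrite -trmx_eq0; apply/eqP/row_matrixP => i.
    by rewrite row0 rowE; apply/eqP; move: (H (delta_mx 0 i)) => /= /negbFE.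
  by exists v; rewrite inE memvf fE.
have Hek : \dim (fullv :&: lker f) = k.-1.
  case: Hf2 => He; last by apply: succn_inj; rewrite He prednK.
  by move: Hf1 cpos; rewrite He => /eqP; rewrite -{2}(add0n (#|F| ^ k)%N) eqn_add2r => /eqP ->.
rewrite Hek in Hf1.
set d := (q ^ u - q ^ u.-1)%N.
have Hci : forall i, #|[set v | (v \in Us i) && (f v != 0%R)]| =
    ((#|[set v | (v \in Us i) && (f v != 0%R)]| != 0%N) * d)%N.
  move=> i; have [H1 H2] := card_nz_f f (Us i); rewrite hdim in H1 H2.
  move: H1 H2; set c := #|_|; set e := \dim _ => H1 H2.
  case: H2 => He.
    by rewrite He in H1; have -> : c = 0%N by lia.
  have Hd : (0 < d)%N by rewrite /d -He /= subn_gt0 ltn_exp2l.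
  have -> : c = d by move: H1 Hd; rewrite /d /q -He /=; lia.
  by rewrite -lt0n Hd mul1n.
set m := (\sum_i (#|[set v | (v \in Us i) && (f v != 0%R)]| != 0%N) : nat)%N.
have Hsum : (\sum_i #|[set v | (v \in Us i) && (v != 0%R) && P v]| = m * d)%N.
  rewrite /m big_distrl /=; apply: eq_bigr => i _; rewrite Hi; exact: Hci.
have mh : (m <= h)%N.
  rewrite /m; apply: (@leq_trans (\sum_(i < h) 1)%N).
    by apply: leq_sum => i _; exact: leq_b1.
  by rewrite sum_nat_const card_ord muln1.
exists m => //.
set A := (q ^ k.-1)%N; set B := (q ^ u.-1)%N.
have qk : (q ^ k = q * A)%N by rewrite /A -expnS prednK.
have qu : (q ^ u = q * B)%N by rewrite /B -expnS prednK.
have B0 : (0 < B)%N by rewrite expn_gt0 ltnW.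
have ed : d = (t * B)%N by rewrite /d -/B qu qt mulSn addKn.
have eA : (q ^ k - A = t * A)%N by rewrite qk qt mulSn addKn.
rewrite Hp Hsum Hc -Hwt in Hfull.
have E : (t * (wt (x *m G) + m * B) = t * A)%N.
  rewrite mulnDr mulnCA -ed -eA; rewrite -/q -/t in Hfull; rewrite -/q -/A in Hf1.
  move: Hf1; set c1 := (X in (X + _)%N = _) => Hf1.
  have Hcc : #|[set v : 'rV[F]_k | (v \in (fullv : {vspace 'rV[F]_k})) && (f v != 0%R)]| = c1.
    by apply: eq_card => v; rewrite !inE.
  rewrite Hfull Hcc -Hf1 addnK //.
have E2 : (wt (x *m G) + m * B = A)%N by apply/eqP; rewrite -(eqn_pmul2l t0); apply/eqP.
split; first lia.
have dle : (d <= q ^ u - 1)%N by rewrite /d; apply: leq_sub2l.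
have : (m * d <= h * (q ^ u - 1))%N by apply: leq_mul.
rewrite -/q -/A eA in hbound.
move=> Hmd.
have : (0 < t * wt (x *m G))%N.
  move: E; rewrite mulnDr mulnCA -ed => E; lia.
by rewrite muln_gt0 => /andP[].
Qed.

Lemma wt0 (F : fieldType) n : wt (0 : 'rV[F]_n) = 0%N.
Proof.
rewrite /wt; apply/eqP; rewrite cards_eq0; apply/eqP/setP => j.
by rewrite !inE [X in X != _]mxE eqxx.
Qed.

Theorem theorem2p1 (F : finFieldType) (k u h : nat)
  (Us : 'I_h -> {vspace 'rV[F]_k})
  (hk : (3 <= k)%N) (hu : (2 <= u)%N) (hh : (1 <= h)%N)
  (hdim : forall i, \dim (Us i) = u)
  (hdisj : forall i j, i != j -> (Us i :&: Us j)%VS = 0%VS)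
  (hbound : (h * (#|F| ^ u - 1) < #|F| ^ k - #|F| ^ k.-1)%N)
  (n : nat) (G : 'M[F]_(k, n)) (hG : rep_matrix Us G) :
  [/\ n = (((#|F| ^ k - 1) - h * (#|F| ^ u - 1)) %/ (#|F| - 1))%N,
      \rank G = k,
      (forall x : 'rV[F]_k, x *m G != (0%R : 'rV[F]_n) ->
         (#|F| ^ k.-1 - h * #|F| ^ u.-1 <= wt (x *m G))%N)
    & (size (undup [seq wt (x *m G) | x <- enum 'rV[F]_k & x *m G != (0%R : 'rV[F]_n)])
         <= h.+1)%N].
Proof.
have hk1 : (1 <= k)%N by apply: leq_trans hk.
have hu1 : (1 <= u)%N by apply: leq_trans hu.
have WX := weight_x hk1 hu1 hdim hdisj hbound hG.
have q1 : (1 < #|F|)%N by apply: finNzRing_gt1.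
split.
- have Hc := count_reps hG (P := predT) (fun _ _ _ => erefl).
  have Hp := partition_count hdisj predT.
  have H0 : #|[set v : 'rV[F]_k | (v != 0%R) && predT v]| = (#|F| ^ k).-1.
    have -> : #|[set v : 'rV[F]_k | (v != 0%R) && predT v]| = #|[set~ (0 : 'rV[F]_k)]|.
      by apply: eq_card => v; rewrite !inE andbT.
    by rewrite cardsC1 card_mx mul1n.
  have Hi : forall i : 'I_h,
      #|[set v : 'rV[F]_k | (v \in Us i) && (v != 0%R) && predT v]| = (#|F| ^ u).-1.
    move=> i; rewrite -(hdim i) -card_vs (cardsD1 0 [set v | v \in Us i]) inE mem0v.
    by rewrite add1n /=; apply: eq_card => v; rewrite !inE andbT andbC.
  rewrite H0 (eq_bigr _ (fun i _ => Hi i)) sum_nat_const card_ord Hc in Hp.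
  have Hn : #|[set j | predT (colv G j)]| = n by rewrite cardsT card_ord.
  rewrite Hn in Hp.
  by rewrite !subn1 Hp addnK mulKn // -subn1 subn_gt0.
- apply/eqP; apply: inj_row_free => v Hv; apply/eqP; apply/negPn/negP => vn0.
  have [m _ [_ Hpos]] := WX v vn0.
  by move: Hpos; rewrite Hv wt0.
- move=> x xG0.
  have xn0 : x != 0 by apply: contraNneq xG0 => ->; rewrite mul0mx.
  have [m mh [-> _]] := WX x xn0.
  by apply: leq_sub2l; apply: leq_mul.
- apply: (@leq_trans (size [seq (#|F| ^ k.-1 - m * #|F| ^ u.-1)%N | m <- iota 0 h.+1]));
    last by rewrite size_map size_iota.
  apply: uniq_leq_size; first exact: undup_uniq.
  move=> w; rewrite mem_undup => /mapP [x]; rewrite mem_filter => /andP [xG0 _] ->.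
  have xn0 : x != 0 by apply: contraNneq xG0 => ->; rewrite mul0mx.
  have [m mh [-> _]] := WX x xn0.
  by apply/mapP; exists m; rewrite // mem_iota add0n ltnS.
Qed.
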